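(* Let $G$ be a simple undirected graph and $s,t\in V(G)$. Then $s$ and $t$ lie in the same biconnected component $B$ of $G+st$, and $B = G_{s,t}+st$.
   Context: $G+st$ denotes the graph obtained from $G$ by adding the edge $st$ (equal to $G$ if $st\in E(G)$); for a subgraph $H$, $H+st$ is defined analogously. The $(s,t)$-relevant part $G_{s,t}$ of $G$ is the subgraph of $G$ induced by all vertices that lie on at least one (simple) $(s,t)$-path in $G$. Biconnected components are the classes of the equivalence relation on edges in which two edges are related if they are equal or lie on a common simple cycle; a biconnected component is regarded as the subgraph formed by such an edge class. *)

(* Defs.v *)
(* A simple undirected graph on a finite vertex type T is a
   symmetric irreflexive relation g : rel T. Edges are 2-element sets [set x; y]. *)
From mathcomp Require Import all_boot.
Set Implicit Arguments. Unset Strict Implicit. Unset Printing Implicit Defensive.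

Section Graphs.
Variable T : finType.

Definition add_edge (g : rel T) (s t : T) : rel T :=
  fun x y => [|| g x y, (x == s) && (y == t) | (x == t) && (y == s)].

Definition is_edge (g : rel T) (E : {set T}) : Prop :=
  exists x y, g x y /\ E = [set x; y].

Definition simple_path (g : rel T) (s t : T) (p : seq T) : Prop :=
  [/\ path g s p, uniq (s :: p) & last s p = t].

(* v lies on at least one simple (s,t)-path: v is a vertex of G_{s,t}. *)
Definition relevant (g : rel T) (s t v : T) : Prop :=
  exists p, simple_path g s t p /\ v \in s :: p.

(* Edge set of G_{s,t} + st (G_{s,t} is the induced subgraph on relevant vertices). *)
Definition relevant_plus_edges (g : rel T) (s t : T) (E : {set T}) : Prop :=
  (exists x y, [/\ g x y, relevant g s t x, relevant g s t y & E = [set x; y]])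
  \/ E = [set s; t].

Definition relevant_plus_vertices (g : rel T) (s t v : T) : Prop :=
  relevant g s t v \/ v = s \/ v = t.

Definition simple_cycle (g : rel T) (c : seq T) : Prop :=
  [/\ 3 <= size c, uniq c & cycle g c].

Definition cycle_edges (c : seq T) : seq {set T} :=
  [seq [set x; next c x] | x <- c].

Definition bicon_rel (g : rel T) (E F : {set T}) : Prop :=
  E = F \/ exists c, [/\ simple_cycle g c, E \in cycle_edges c & F \in cycle_edges c].

Definition is_bicomp (g : rel T) (B : {set {set T}}) : Prop :=
  exists E0, is_edge g E0 /\
    forall F, F \in B <-> (is_edge g F /\ bicon_rel g E0 F).

Definition bicomp_vertex (B : {set {set T}}) (v : T) : Prop :=
  exists2 F, F \in B & v \in F.

End Graphs.

(* Main.v *)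
Require Import Defs.
From mathcomp Require Import all_boot.
From Stdlib Require Import ClassicalEpsilon.
Set Implicit Arguments. Unset Strict Implicit. Unset Printing Implicit Defensive.

Section S.
Variable T : finType.
Variable g : rel T.
Hypothesis gsym : symmetric g.
Hypothesis girr : irreflexive g.

Lemma headrev (z : T) L : head z (rev L) = last z L.
Proof. by case/lastP: L => // l a; rewrite rev_rcons last_rcons. Qed.

Lemma lastrev (z : T) L : last z (rev L) = head z L.
Proof. by case: L => // a l; rewrite rev_cons last_rcons. Qed.

Lemma sortedrev L : sorted g (rev L) = sorted g L.
Proof. by rewrite rev_sorted; apply/idP/idP; apply: sub_sorted => x y /=; rewrite gsym. Qed.

Lemma uniq_ins (A W B : seq T) : uniq (A ++ B) -> uniq W ->
  all (fun w => w \notin A ++ B) W -> uniq (A ++ W ++ B).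
Proof.
move=> uAB uW aW.
have pe : perm_eq (A ++ W ++ B) (W ++ A ++ B) by rewrite perm_catCA.
rewrite (perm_uniq pe) cat_uniq uW uAB andbT /=.
apply/hasPn => v vin; apply/negP => vW.
by move/allP: aW => /(_ v vW); rewrite vin.
Qed.

Lemma splice1 (P1 D1 D2 W : seq T) x c z L :
  L = P1 ++ x :: D1 ++ c :: D2 ->
  sorted g L -> uniq L -> uniq W -> all (fun w => w \notin L) W ->
  sorted g (x :: W ++ [:: c]) ->
  exists M M1 M2, [/\ sorted g M, uniq M, head z M = head z L,
     last z M = last z L & M = M1 ++ x :: head c W :: M2].
Proof.
move=> -> sL uL uW aW sW.
exists (P1 ++ x :: W ++ c :: D2), P1, (behead (W ++ c :: D2)); split.
- move: sL; rewrite !sorted_cat_cons => /andP [-> ].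
  rewrite cat_path => /andP [_ /=] /andP [_ pD2].
  have -> : W ++ c :: D2 = (W ++ [:: c]) ++ D2 by rewrite -catA.
  rewrite cat_path (sW : path _ _ _) /=.
  by rewrite last_cat /= pD2.
- have -> : P1 ++ x :: W ++ c :: D2 = (P1 ++ [:: x]) ++ W ++ (c :: D2)
    by rewrite -catA.
  have ss : subseq ((P1 ++ [:: x]) ++ c :: D2) (P1 ++ x :: D1 ++ c :: D2).
    rewrite -catA cat_subseq //= eqxx; exact: suffix_subseq.
  apply: uniq_ins => //; first exact: subseq_uniq ss uL.
  apply/allP => w wW; apply/negP => win.
  by move/allP: aW => /(_ w wW); rewrite (mem_subseq ss win).
- by clear; case: P1.
- by rewrite !last_cat /= ?last_cat.
- by clear -W; case: W.
Qed.

Definition adjin (M : seq T) x y := exists M1 M2, M = M1 ++ x :: y :: M2 \/ M = M1 ++ y :: x :: M2.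

Lemma splice L x c W z :
  sorted g L -> uniq L -> x \in L -> c \in L -> c != x -> uniq W ->
  all (fun w => w \notin L) W -> sorted g (x :: W ++ [:: c]) ->
  exists M, [/\ sorted g M, uniq M, head z M = head z L,
     last z M = last z L & adjin M x (head c W)].
Proof.
move=> sL uL xL cL cx uW aW sW.
case/splitPr: xL sL uL cL aW => P1 P2 sL uL cL aW.
move: cL; rewrite mem_cat inE (negbTE cx) /= => /orP [cP1|cP2].
- case/splitPr: cP1 sL uL aW => D1 D2 sL uL aW.
  set L0 := (D1 ++ c :: D2) ++ x :: P2.
  have eR : rev L0 = rev P2 ++ x :: rev D2 ++ c :: rev D1.
    by rewrite /L0 !rev_cat !rev_cons -!cats1 -!catA.
  have [|||||M [M1 [M2 [sM uM hM lM eM]]]] := @splice1 _ _ _ W x c z _ eR.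
  + by rewrite sortedrev.
  + by rewrite rev_uniq.
  + done.
  + by apply/allP => w wW; rewrite mem_rev; move/allP: aW; apply.
  + done.
  exists (rev M); split.
  + by rewrite sortedrev.
  + by rewrite rev_uniq.
  + by rewrite headrev lM lastrev.
  + by rewrite lastrev hM headrev.
  + exists (rev M2), (rev M1); right.
    by rewrite eM rev_cat !rev_cons -!cats1 -!catA.
- case/splitPr: cP2 sL uL aW => D1 D2 sL uL aW.
  have [M [M1 [M2 [sM uM hM lM eM]]]] := splice1 z (erefl _) sL uL uW aW sW.
  exists M; split => //.
  by exists M1, M2; left.
Qed.

Lemma findsplit (L R : seq T) : has (fun v => v \in L) R ->
  exists A c B, [/\ R = A ++ c :: B, c \in L & all (fun w => w \notin L) A].
Proof.
elim: R => //= r R IH; case rL: (r \in L) => /= H.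
- by exists [::], r, R.
- have [A [c [B [-> cL aA]]]] := IH H.
  by exists (r :: A), c, B; rewrite /= rL aA.
Qed.

Lemma ext (L Q2 : seq T) x y : sorted g (y :: Q2) -> uniq (y :: Q2) -> y \notin L ->
  has (fun v => v \in L) Q2 -> g x y ->
  exists c W, [/\ c \in Q2, c \in L, uniq W, all (fun w => w \notin L) W
    & head c W = y /\ sorted g (x :: W ++ [:: c])].
Proof.
move=> sQ uQ yL hQ gxy.
have [A [c [B [eQ cL aA]]]] := findsplit hQ.
exists c, (y :: A); split => //; last split => //.
- by rewrite eQ mem_cat inE eqxx orbT.
- by move: uQ; rewrite eQ -cat_cons cat_uniq => /andP [].
- by rewrite /= yL.
- move: sQ; rewrite /= eQ gxy cat_path => /andP [pA /= /andP [gc _]].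
  by rewrite cat_path pA /= gc.
Qed.

Definition spl (L : seq T) s t := [/\ sorted g L, uniq L, head s L = s, last s L = t & L != [::]].

Lemma spl_last L s t : spl L s t -> t \in L.
Proof. by case=> _ _ _ <-; case: L => // a l _ /=; exact: mem_last. Qed.

Lemma spl_head L s t : spl L s t -> s \in L.
Proof. by case=> _ _ <- _; case: L => // a l _; rewrite inE eqxx. Qed.

Lemma adj_rel L Q s t x y : g x y -> spl L s t -> x \in L -> spl Q s t -> y \in Q ->
  exists M, spl M s t /\ adjin M x y.
Proof.
move=> gxy sL xL sQ yQ.
have fin : forall c W, c \in L -> c != x -> uniq W -> all (fun w => w \notin L) W ->
    sorted g (x :: W ++ [:: c]) -> head c W = y -> exists M, spl M s t /\ adjin M x y.
  move=> c W cL cx uW aW sW hW.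
  case: (sL) => sL1 uL1 hL lL nL.
  have [M [sM uM hM lM aM]] := splice s sL1 uL1 xL cL cx uW aW sW.
  exists M; split; last by rewrite -hW.
  split => //; first by rewrite hM.
  by rewrite lM.
  by case: aM => M1 [M2 [] ->]; case: M1.
case yL: (y \in L).
  apply: (fin y [::]) => //=; last by rewrite gxy.
  by apply/negP => /eqP eyx; move: gxy; rewrite eyx girr.
have sQ' := sQ; case: sQ' => sQ1 uQ1 hQ lQ nQ.
case/splitPr: yQ sQ1 uQ1 hQ lQ nQ => Q1 Q2 sQ1 uQ1 hQ lQ nQ.
have tL := spl_last sL; have sL' := spl_head sL.
have hQ2 : has (fun v => v \in L) Q2.
  move: lQ; rewrite last_cat /=; case: Q2 {sQ1 uQ1 hQ nQ} => [/= ety|q Q2' elt].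
    by move: tL; rewrite -ety yL.
  apply/hasP; exists t => //; rewrite -elt /=; exact: mem_last.
have hQ1 : has (fun v => v \in rev L) (rev Q1).
  move: hQ; case: Q1 {sQ1 uQ1 lQ nQ} => [/= esy|q Q1' eq].
    by move: sL'; rewrite -esy yL.
  apply/hasP; exists s; last by rewrite mem_rev.
  by rewrite mem_rev -eq /= inE eqxx.
have yL' : y \notin L by rewrite yL.
have [||c [W [cQ cL uW aW [hW sW]]]] := ext (L:=L) (Q2:=Q2) (x:=x) _ _ yL' hQ2 gxy.
- by move: sQ1; rewrite sorted_cat_cons => /andP [].
- by move: uQ1; rewrite cat_uniq => /and3P [].
have [|||c' [W' [cQ' cL' uW' aW' [hW' sW']]]] := ext (L:=L) (Q2:=rev Q1) (x:=x) _ _ yL' _ gxy.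
- move: sQ1; rewrite -sortedrev rev_cat rev_cons -cats1 -catA /= sorted_cat_cons.
  by case/andP.
- move: uQ1; rewrite -rev_uniq rev_cat rev_cons -cats1 -catA /= cat_uniq.
  by case/and3P.
- by move: hQ1; apply: sub_has => v; rewrite mem_rev.
have cc' : c != c'.
  apply/eqP => ecc; move: uQ1; rewrite cat_uniq => /and3P [_ /hasPn H _].
  by move: (H c); rewrite inE cQ orbT ecc -(mem_rev Q1) cQ' => /(_ isT).
case cx: (c == x).
  apply: (fin c' W') => //.
  by apply/negP => /eqP ec; move: cc'; rewrite (eqP cx) ec eqxx.
by apply: (fin c W) => //; rewrite cx.
Qed.

Lemma relP s t v : relevant g s t v <-> exists L, spl L s t /\ v \in L.
Proof.
split.
- case=> p [[pp up lp] vp]; exists (s :: p); split => //.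
- case=> [[|a p]] [[sL uL hL lL nL] vL] //.
  move: hL => /= eas; subst a.
  by exists p; split.
Qed.

Lemma next_head (x : T) l : next (x :: l) x = head x l.
Proof. by case: l => [|a l] /=; rewrite /next /= eqxx. Qed.

Lemma next_adj M M1 M2 (x y : T) : uniq M -> M = M1 ++ x :: y :: M2 -> next M x = y.
Proof.
move=> uM eM; rewrite -(next_rot (size M1) uM) eM rot_size_cat.
by rewrite cat_cons next_head.
Qed.

Lemma next_lst M M1 (x : T) : uniq M -> M = rcons M1 x -> next M x = head x M1.
Proof.
move=> uM eM; rewrite -(next_rot (size M1) uM) eM -cats1 rot_size_cat.
by rewrite next_head.
Qed.

Lemma sub_add s t : subrel g (add_edge g s t).
Proof. by move=> a b gab; rewrite /add_edge gab. Qed.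

Lemma cyc_of_path M s t x y : s != t -> spl M s t -> adjin M x y -> 3 <= size M ->
  exists c, [/\ simple_cycle (add_edge g s t) c, [set s; t] \in cycle_edges c
    & [set x; y] \in cycle_edges c].
Proof.
move=> hst [sM uM hM lM nM] aM sz.
case: M hM lM sM uM nM aM sz => [|a m] //= eas; subst a => lM sM uM _ aM sz.
have [m' em] : exists m', m = rcons m' t.
  case/lastP: m lM {sM uM aM sz} => [/= ets|m' b]; first by move: hst; rewrite ets eqxx.
  by rewrite last_rcons => ->; exists m'.
exists (s :: m); split.
- split => //. rewrite /cycle rcons_path (sub_path (@sub_add s t) sM) lM.
  by rewrite /add_edge !eqxx !orbT.
- have -> : [set s; t] = [set t; next (s :: m) t].
    have -> : next (s :: m) t = s.
      by rewrite (next_lst (M1 := s :: m')) // em rcons_cons.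
    by rewrite setUC.
  by apply/mapP; exists t => //; rewrite em -rcons_cons mem_rcons inE eqxx.
- case: aM => M1 [M2 [] eM].
  + rewrite -(next_adj (uM : uniq (s :: m)) eM); apply/mapP; exists x => //.
    by rewrite eM mem_cat inE eqxx orbT.
  + rewrite setUC -(next_adj (uM : uniq (s :: m)) eM); apply/mapP; exists y => //.
    by rewrite eM mem_cat inE eqxx orbT.
Qed.

Lemma two_split (s t a b : T) M1 M2 : [:: s; t] = M1 ++ a :: b :: M2 -> a = s /\ b = t.
Proof.
case: M1 => [|m1 [|m2 M1]] /=.
- by case=> -> ->.
- by case.
- by case=> _ _; case: M1.
Qed.

Lemma small_case M s t x y : s != t -> spl M s t -> adjin M x y -> size M < 3 ->
  [set x; y] = [set s; t].
Proof.
move=> hst [sM uM hM lM nM] [M1 [M2 aM]] sz.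
case: M hM lM sM uM nM aM sz => [|a [|b [|c M]]] //= eas; subst a.
- by move=> est; move: hst; rewrite est eqxx.
- move=> ebt; subst b => _ _ _ [] /two_split [-> ->] //.
  by rewrite setUC.
Qed.

Lemma path_avoid s t a l : path (add_edge g s t) a l ->
  all (fun v => (v != s) && (v != t)) l -> path g a l.
Proof.
elim: l a => //= b l IH a /andP [eab pl] /andP [/andP [bs bt] al].
rewrite IH // andbT.
by move: eab; rewrite /add_edge (negbTE bs) (negbTE bt) !andbF !orbF.
Qed.

Lemma cyc_rel c s t v : s != t -> simple_cycle (add_edge g s t) c ->
  [set s; t] \in cycle_edges c -> v \in c -> relevant g s t v.
Proof.
move=> hst [sz uc cc] /mapP [u uc' est] vc.
case: (rot_to uc') => i r er.
have uc2 : uniq (u :: r) by rewrite -er rot_uniq.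
have cc2 : cycle (add_edge g s t) (u :: r) by rewrite -er rot_cycle.
have sz2 : 3 <= size (u :: r) by rewrite -er size_rot.
have nx : next c u = head u r by rewrite -(next_rot i uc) er next_head.
case: r er uc2 cc2 sz2 nx => [|w [|q r']] // er uc2 cc2 _ nx.
rewrite nx /= in est.
have us : u \in [set s; t] by rewrite est set21.
have ws : w \in [set s; t] by rewrite est set22.
have uw : u != w by move: uc2; rewrite /= inE negb_or => /andP [/andP []].
have ur : u \notin q :: r' by move: uc2; rewrite /= => /andP [H _]; move: H; rewrite !inE !negb_or => /and3P [_ ? ?]; by apply/andP.
have wr : w \notin q :: r' by move: uc2; rewrite /= => /and3P [_ ? _].
have avoid : all (fun v => (v != s) && (v != t)) (q :: r').
  apply/allP => z zr; apply/andP; split; apply/negP => /eqP ez; subst z.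
  - case/set2P: us => eu; subst u.
      by rewrite zr in ur.
    case/set2P: ws => ew; subst w; first by rewrite zr in wr.
    by move: uw; rewrite eqxx.
  - case/set2P: us => eu; subst u.
      case/set2P: ws => ew; subst w; last by rewrite zr in wr.
      by move: uw; rewrite eqxx.
    by rewrite zr in ur.
set N := w :: rcons (q :: r') u.
have sN : sorted g N.
  have pp : path (add_edge g s t) w (rcons (q :: r') u).
    by case/andP: (cc2 : path _ u (w :: rcons (q :: r') u)).
  move: pp; rewrite rcons_path => /andP [pr el].
  rewrite /N /sorted rcons_path (path_avoid pr avoid) /=.
  have lq : last q r' \in q :: r' by exact: mem_last.
  move/allP: avoid => /(_ _ lq) /andP [ls lt].
  by move: el; rewrite /add_edge (negbTE ls) (negbTE lt) /= orbF.
have eN : N = rot 1 (rot i c) by rewrite er rot1_cons.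
have uN : uniq N by rewrite eN !rot_uniq.
have vN : v \in N by rewrite eN !mem_rot.
have hN : head s N = w by [].
have lN : last s N = u by rewrite /N -rcons_cons last_rcons.
have nN : N != [::] by [].
clearbody N.
apply/relP.
case/set2P: us => eu; case/set2P: ws => ew.
- by move: uw; rewrite eu ew eqxx.
- exists (rev N); split; last by rewrite mem_rev.
  split.
  + by rewrite sortedrev.
  + by rewrite rev_uniq.
  + by rewrite headrev lN.
  + by rewrite lastrev hN.
  + by move: nN; rewrite -!size_eq0 size_rev.
- exists N; split => //; split => //; by rewrite ?hN ?lN.
- by move: uw; rewrite eu ew eqxx.
Qed.

Lemma key s t F : s != t -> (relevant_plus_edges g s t F <->
  is_edge (add_edge g s t) F /\ bicon_rel (add_edge g s t) [set s; t] F).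
Proof.
move=> hst; split.
- case=> [[x [y [gxy rx ry ->]]] | ->].
  + split; first by exists x, y; split => //; exact: sub_add.
    have [L [sL xL]] := (relP s t x).1 rx.
    have [Q [sQ yQ]] := (relP s t y).1 ry.
    have [M [sM aM]] := adj_rel gxy sL xL sQ yQ.
    case: (leqP 3 (size M)) => sz.
      have [c [sc Ec Fc]] := cyc_of_path hst sM aM sz.
      by right; exists c.
    by left; rewrite (small_case hst sM aM sz).
  + split; last by left.
    by exists s, t; split => //; rewrite /add_edge !eqxx orbT.
- case=> [[x [y [exy ->]]] [E|[c [sc Ec Fc]]]].
  + by right; rewrite E.
  + case/mapP: Fc => v vc ->.
    have ev : add_edge g s t v (next c v).
      by case: sc => _ _ cc; exact: next_cycle.
    have rv := cyc_rel hst sc Ec vc.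
    have rn : relevant g s t (next c v) by apply: (cyc_rel hst sc Ec); rewrite mem_next.
    move: ev; rewrite /add_edge; case gv: (g v (next c v)) => /=.
      by move=> _; left; exists v, (next c v); split.
    case/orP => /andP [/eqP -> /eqP ->]; right => //.
    by rewrite setUC.
Qed.

Definition asb (P : Prop) : bool := if excluded_middle_informative P then true else false.
Lemma asbP P : asb P <-> P.
Proof. by rewrite /asb; case: excluded_middle_informative. Qed.

Lemma main_sec s t : s != t ->
  exists B : {set {set T}},
    [/\ is_bicomp (add_edge g s t) B,
        bicomp_vertex B s, bicomp_vertex B t,
        (forall F, F \in B <-> relevant_plus_edges g s t F) &
        (forall v, bicomp_vertex B v <-> relevant_plus_vertices g s t v)].
Proof.
move=> hst.
pose B := [set F | asb (relevant_plus_edges g s t F)].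
have BP : forall F, F \in B <-> relevant_plus_edges g s t F.
  by move=> F; rewrite inE asbP.
exists B; split => //.
- exists [set s; t]; split.
    by exists s, t; split => //; rewrite /add_edge !eqxx orbT.
  by move=> F; rewrite BP; exact: key.
- by exists [set s; t]; [apply/BP; right | rewrite set21].
- by exists [set s; t]; [apply/BP; right | rewrite set22].
- move=> v; split.
  + case=> F /BP [[x [y [gxy rx ry ->]]] | ->] /set2P [] ->; rewrite /relevant_plus_vertices; tauto.
  + case=> [rv | [-> | ->]]; last first.
    * by exists [set s; t]; [apply/BP; right | rewrite set22].
    * by exists [set s; t]; [apply/BP; right | rewrite set21].
    have [L [sL vL]] := (relP s t v).1 rv.
    have sL' := sL; case: sL' => sL1 uL hL lL nL.
    case: L sL sL1 uL hL lL nL vL => [|a p] // sL sL1 _ /= eas _ _; subst a.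
    rewrite inE => /orP [/eqP -> | vp].
      by exists [set s; t]; [apply/BP; right | rewrite set21].
    case/splitPr: vp sL sL1 => p1 p2 sL sL1.
    have guv : g (last s p1) v.
      by move: sL1; rewrite /sorted cat_path => /andP [_ /andP []].
    have ru : relevant g s t (last s p1).
      apply/relP; exists (s :: p1 ++ v :: p2); split => //.
      by rewrite -cat_cons mem_cat mem_last.
    have rv' : relevant g s t v by [].
    exists [set last s p1; v]; last by rewrite set22.
    by apply/BP; left; exists (last s p1), v; split.
Qed.
End S.

Theorem mainTheorem4 (T : finType) (g : rel T)
  (g_sym : symmetric g) (g_irr : irreflexive g) (s t : T) (hst : s != t) :
  exists B : {set {set T}},
    [/\ is_bicomp (add_edge g s t) B,
        bicomp_vertex B s, bicomp_vertex B t,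
        (forall F, F \in B <-> relevant_plus_edges g s t F) &
        (forall v, bicomp_vertex B v <-> relevant_plus_vertices g s t v)].
Proof. exact: (main_sec g_sym g_irr hst). Qed.
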